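(* For every fixed $k,K\in\mathbf{N}$ there is a finite set of permutations $P$ such that $$\{\pi\in S:\ \mathrm{al}(\pi)<K\ \&\ s_k(\pi)<K\}\subset P[H_k^+\cup H_k^-].$$
   Context: $S_n$ is the set of permutations of $[n]$, $S=\bigcup_n S_n$; $\pi\prec\rho$ means $\rho$ has a subsequence order-isomorphic to $\pi$; $\pi|A$ is the permutation order-isomorphic to the subsequence of $\pi$ at positions in $A$. Alternating: $\sigma(\{1,3,5,\dots\})>\sigma(\{2,4,6,\dots\})$. $\mathrm{al}(\pi)$ is the maximum length of an alternating $\sigma$ with $\sigma\prec\pi$ or $\sigma\prec\pi^{-1}$. For $\sigma\in S_n,\tau\in S_m$, $\sigma\oplus\tau\in S_{n+m}$ equals $\sigma(i)$ at $i\le n$ and $n+\tau(i-n)$ at $i>n$; $\sigma\ominus\tau$ equals $m+\sigma(i)$ at $i\le n$ and $\tau(i-n)$ at $i>n$. Up-(down-)indecomposable means not of the form $\sigma\oplus\tau$ ($\sigma\ominus\tau$) with both nonempty; $h^+(\pi)$ ($h^-(\pi)$) is the maximum length of a block in the unique decomposition of $\pi$ as a $\oplus$-sum of up-indecomposables ($\ominus$-sum of down-indecomposables). $H_k^\pm=\{\pi\in S:h^\pm(\pi)<k\}$. For $k\ge2$ and $\pi\in S_n$, $s_k(\pi)$ is the number $r$ of intervals in the greedy partition $I_1<\dots<I_r$ of $[n]$ where $I_1$ is the longest initial interval with $\pi|I_1\in H_k^+\cup H_k^-$, $I_2$ the longest following interval with $\pi|I_2\in H_k^+\cup H_k^-$,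 etc.; $s_1(\pi)=\infty$ by convention. Inflation: for $\sigma\in S_m$ and $\tau_i\in S_{n_i}$ ($i=1,\dots,m$), $\sigma[\tau_1,\dots,\tau_m]\in S_{n_1+\dots+n_m}$ is the permutation whose positions split into consecutive intervals of lengths $n_1,\dots,n_m$, such that the restriction to the $i$-th interval is order-isomorphic to $\tau_i$, and the $i$-th and $j$-th intervals' value sets are intervals of integers ordered as $\sigma(i)$ versus $\sigma(j)$ (i.e. each point of $\sigma$ is replaced by a small copy of $\tau_i$). For sets $P,Q\subset S$, $P[Q]=\{\pi[\sigma_1,\dots,\sigma_m]: m\in\mathbf{N},\ \pi\in P\cap S_m,\ \sigma_i\in Q\}$. *)

(* Defs.v *)
(* Permutations of [n] are represented as sequences of
   natural numbers that are permutations of 0..n-1 (0-based values;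
   position i of the sequence holds pi(i+1)-1). *)
From mathcomp Require Import all_boot all_order.
Set Implicit Arguments. Unset Strict Implicit. Unset Printing Implicit Defensive.

Definition is_perm (p : seq nat) : bool := perm_eq p (iota 0 (size p)).

Definition std (s : seq nat) : seq nat :=
  map (fun x => count (fun y => y < x) s) s.

Definition restr (p : seq nat) (m : bitseq) : seq nat := std (mask m p).

Definition contains (sigma p : seq nat) : bool :=
  [exists m : (size p).-tuple bool, restr p m == sigma].

Definition inv (p : seq nat) : seq nat := map (fun v => index v p) (iota 0 (size p)).

(* alternating: every value at an odd (1-based) position exceeds every value
   at an even (1-based) position *)
Definition alternating (s : seq nat) : bool :=
  [forall i : 'I_(size s), forall j : 'I_(size s),
     (~~ odd i && odd j) ==> (nth 0 s j < nth 0 s i)].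

Definition alt_of_len (p : seq nat) (j : nat) : bool :=
  [exists m : (size p).-tuple bool,
     (size (restr p m) == j) && alternating (restr p m)].

Definition al (p : seq nat) : nat :=
  \max_(j < (size p).+1 | alt_of_len p j || alt_of_len (inv p) j) j.

Definition oplus (s t : seq nat) : seq nat := s ++ map (addn (size s)) t.
Definition ominus (s t : seq nat) : seq nat := map (addn (size t)) s ++ t.

Definition up_indec (p : seq nat) : Prop :=
  ~ exists s t, [/\ is_perm s, is_perm t, s <> [::], t <> [::] & p = oplus s t].
Definition down_indec (p : seq nat) : Prop :=
  ~ exists s t, [/\ is_perm s, is_perm t, s <> [::], t <> [::] & p = ominus s t].

Definition plus_decomp (bs : seq (seq nat)) (p : seq nat) : Prop :=
  [/\ p = foldr oplus [::] bs,
      forall b, b \in bs -> is_perm b /\ b <> [::] & 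
      forall b, b \in bs -> up_indec b].
Definition minus_decomp (bs : seq (seq nat)) (p : seq nat) : Prop :=
  [/\ p = foldr ominus [::] bs,
      forall b, b \in bs -> is_perm b /\ b <> [::] & 
      forall b, b \in bs -> down_indec b].

(* membership in H_k^+ / H_k^- : h^±(p) < k (the decomposition is unique) *)
Definition Hplus (k : nat) (p : seq nat) : Prop :=
  is_perm p /\ exists bs, plus_decomp bs p /\ (forall b, b \in bs -> size b < k).
Definition Hminus (k : nat) (p : seq nat) : Prop :=
  is_perm p /\ exists bs, minus_decomp bs p /\ (forall b, b \in bs -> size b < k).
Definition Hpm (k : nat) (p : seq nat) : Prop := Hplus k p \/ Hminus k p.

(* pi|[a, b)  (0-based positions a..b-1) *)
Definition slice (p : seq nat) (a b : nat) : seq nat := std (take (b - a) (drop a p)).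

Inductive greedy (k : nat) (p : seq nat) : nat -> nat -> Prop :=
| greedy_end : greedy k p (size p) 0
| greedy_step a b r :
    a < b -> b <= size p -> Hpm k (slice p a b) ->
    (forall b', b < b' -> b' <= size p -> ~ Hpm k (slice p a b')) ->
    greedy k p b r -> greedy k p a r.+1.

(* s_k(p) = r (finite); for k < 2 no finite value (s_1 = infinity) *)
Definition s_is (k : nat) (p : seq nat) (r : nat) : Prop :=
  2 <= k /\ greedy k p 0 r.

Definition inflate (sigma : seq nat) (taus : seq (seq nat)) : seq nat :=
  flatten [seq map (addn (\sum_(j < size sigma | nth 0 sigma j < nth 0 sigma i)
                              size (nth [::] taus j)))
               (nth [::] taus i) | i <- iota 0 (size sigma)].

Definition in_inflation (P : seq (seq nat)) (Q : seq nat -> Prop) (p : seq nat) : Prop :=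
  exists sigma taus, [/\ sigma \in P, is_perm sigma, size taus = size sigma,
    forall t, t \in taus -> is_perm t /\ Q t & p = inflate sigma taus].

(* Main.v *)
Require Import Defs.
From mathcomp Require Import all_boot all_order zify.
Set Implicit Arguments. Unset Strict Implicit. Unset Printing Implicit Defensive.

Definition rank (s : seq nat) (x : nat) := count (fun y => y < x) s.

Lemma stdE s : std s = map (rank s) s. Proof. by []. Qed.

Lemma rank_lt s x y : x < y -> x \in s -> rank s x < rank s y.
Proof.
move=> xy; elim: s => //= a s IH; rewrite inE => /orP[/eqP<-|xs].
  rewrite /rank /= ltnn xy /= add0n add1n ltnS.
  by apply: sub_count => z /= zx; apply: ltn_trans zx xy.
have := IH xs; rewrite /rank /=.
case: (ltnP a x) => ax.
  by rewrite (ltn_trans ax xy) !add1n ltnS.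
by case: (a < y) => h; rewrite ?add0n ?add1n // ltnW.
Qed.

Lemma rank_le s x y : x <= y -> rank s x <= rank s y.
Proof. by move=> xy; apply: sub_count => z /= zx; apply: leq_trans zx xy. Qed.

Lemma rank_mono s x y : x \in s -> (rank s x < rank s y) = (x < y).
Proof.
move=> xs; case: (ltnP x y) => xy; first exact: rank_lt.
by rewrite ltnNge rank_le.
Qed.

Lemma rank_inj s : {in s &, injective (rank s)}.
Proof.
move=> x y xs ys e; case: (ltngtP x y) => // h.
  by have := rank_lt h xs; rewrite e ltnn.
by have := rank_lt h ys; rewrite e ltnn.
Qed.

Lemma rank_size s x : x \in s -> rank s x < size s.
Proof.
move=> xs; rewrite /rank -(count_predC (fun y => y < x) s) -addn1 leq_add2l.
by rewrite -has_count; apply/hasP; exists x => //=; rewrite ltnn.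
Qed.

Lemma size_std s : size (std s) = size s. Proof. by rewrite size_map. Qed.

Lemma std_mono (f : nat -> nat) s :
  {in s &, forall x y, (f x < f y) = (x < y)} -> std (map f s) = std s.
Proof.
move=> H; rewrite /std -map_comp; apply/eq_in_map => x xs /=.
rewrite count_map; apply: eq_in_count => y ys /=; exact: H.
Qed.

Lemma std_std s : std (std s) = std s.
Proof. exact: (@std_mono (rank s) s (fun x y xs ys => rank_mono y xs)). Qed.

Lemma std_addn c s : std (map (addn c) s) = std s.
Proof. by apply: std_mono => x y _ _; rewrite ltn_add2l. Qed.

Lemma count_lt_iota x n : x <= n -> count (fun y => y < x) (iota 0 n) = x.
Proof.
move=> xn; rewrite -(subnKC xn) iotaD count_cat.
rewrite (eq_in_count (a2 := predT)); last by move=> y; rewrite mem_iota.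
rewrite count_predT size_iota (eq_in_count (a2 := pred0)); last first.
  by move=> y; rewrite mem_iota /= add0n => /andP[h _]; rewrite ltnNge h.
by rewrite count_pred0 addn0.
Qed.

Lemma perm_mem_lt s x : is_perm s -> x \in s -> x < size s.
Proof. by move=> /perm_mem -> ; rewrite mem_iota. Qed.

Lemma std_perm_id s : is_perm s -> std s = s.
Proof.
move=> ps; rewrite /std; apply: (etrans _ (map_id s)); apply/eq_in_map => x xs /=.
have /permP -> := ps; apply: count_lt_iota; apply: ltnW; exact: perm_mem_lt.
Qed.

Lemma perm_uniq' s : is_perm s -> uniq s.
Proof. by move=> ps; rewrite (perm_uniq ps) iota_uniq. Qed.

Lemma std_is_perm s : uniq s -> is_perm (std s).
Proof.
move=> us; rewrite /is_perm size_std.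
have ust : uniq (std s) by rewrite map_inj_in_uniq //; exact: rank_inj.
have sub : {subset std s <= iota 0 (size s)}.
  by move=> y /mapP[x xs ->]; rewrite mem_iota add0n rank_size.
have [_ E] := uniq_min_size ust sub (eq_leq (etrans (size_iota 0 _) (esym (size_std s)))).
by apply: uniq_perm => //; apply: iota_uniq.
Qed.

Definition Rd (d : bool) (a b : nat) : bool := if d then a < b else b < a.

Lemma Rd_trans d : transitive (Rd d).
Proof. by case: d => a b c /=; [move=> h1 h2; exact: ltn_trans h1 h2 | move=> h1 h2; exact: ltn_trans h2 h1]. Qed.

Lemma Rd_irr d a : Rd d a a = false.
Proof. by case: d => /=; rewrite ltnn. Qed.

Lemma Rd_asym d a b : Rd d a b -> Rd d b a -> False.
Proof. by move=> h1 h2; have := Rd_trans h1 h2; rewrite Rd_irr. Qed.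

Lemma Rd_total d a b : a != b -> Rd d a b || Rd d b a.
Proof. by case: d => /=; case: ltngtP. Qed.

Definition goodb (k : nat) (d : bool) (b : seq nat) : Prop :=
  [/\ is_perm b, b <> [::], (if d then up_indec b else down_indec b) & size b < k].

Lemma is_perm_nil : is_perm [::]. Proof. by []. Qed.

Lemma oplus_perm s t : is_perm s -> is_perm t -> is_perm (oplus s t).
Proof.
rewrite /is_perm /oplus size_cat size_map => ps pt.
by rewrite iotaD add0n -[in iota (size s) _](addn0 (size s)) iotaDl perm_cat // perm_map.
Qed.

Lemma ominus_perm s t : is_perm s -> is_perm t -> is_perm (ominus s t).
Proof.
rewrite /is_perm /ominus size_cat size_map => ps pt.
rewrite addnC iotaD add0n -[in iota (size t) _](addn0 (size t)) iotaDl perm_catC perm_cat // perm_map //.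
Qed.

Lemma foldr_oplus_perm bs : (forall b, b \in bs -> is_perm b) -> is_perm (foldr oplus [::] bs).
Proof.
elim: bs => //= b bs IH H; apply: oplus_perm; first by apply: H; rewrite inE eqxx.
by apply: IH => c cb; apply: H; rewrite inE cb orbT.
Qed.

Lemma foldr_ominus_perm bs : (forall b, b \in bs -> is_perm b) -> is_perm (foldr ominus [::] bs).
Proof.
elim: bs => //= b bs IH H; apply: ominus_perm; first by apply: H; rewrite inE eqxx.
by apply: IH => c cb; apply: H; rewrite inE cb orbT.
Qed.

Lemma std_cat_lt s t : allrel ltn s t -> std (s ++ t) = oplus (std s) (std t).
Proof.
move=> /allrelP H; rewrite /std /oplus map_cat size_map -map_comp; congr (_ ++ _).
  apply/eq_in_map => x xs; rewrite count_cat.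
  rewrite (eq_in_count (a2 := pred0) (s := t)) ?count_pred0 ?addn0 //.
  by move=> y yt /=; apply/negbTE; rewrite -leqNgt; apply: ltnW; exact: H.
apply/eq_in_map => y yt /=; rewrite count_cat.
rewrite (eq_in_count (a2 := predT) (s := s)) ?count_predT //.
by move=> x xs /=; exact: H.
Qed.

Lemma std_cat_gt s t : allrel (Rd false) s t -> std (s ++ t) = ominus (std s) (std t).
Proof.
move=> /allrelP H; rewrite /std /ominus map_cat size_map -map_comp; congr (_ ++ _).
  apply/eq_in_map => x xs; rewrite count_cat /= addnC.
  rewrite (eq_in_count (a2 := predT) (s := t)) ?count_predT //.
  by move=> y yt /=; have := H x y xs yt.
apply/eq_in_map => y yt /=; rewrite count_cat.
rewrite (eq_in_count (a2 := pred0) (s := s)) ?count_pred0 //.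
by move=> x xs /=; apply/negbTE; rewrite -leqNgt; apply: ltnW; exact: (H x y xs yt).
Qed.

Lemma allrel_flatten d (v : seq nat) vs :
  all (allrel (Rd d) v) vs -> allrel (Rd d) v (flatten vs).
Proof. elim: vs => [_|w vs IH /andP[h1 h2]] /=; first by apply/allrelP.
by rewrite allrel_catr h1 IH. Qed.

Lemma allrel_sub (r : nat -> nat -> bool) xs ys ys' :
  allrel r xs ys -> {subset ys' <= ys} -> allrel r xs ys'.
Proof.
move=> /allrelP H sub; apply/allrelP => x y xx yy; apply: H => //; exact: sub.
Qed.

Lemma mem_flatten_sub (vs : seq (seq nat)) v : v \in vs -> {subset v <= flatten vs}.
Proof. move=> vv x xv; apply/flattenP; by exists v. Qed.

Lemma run_Hpm k d vs :
  uniq (flatten vs) -> pairwise (allrel (Rd d)) vs ->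
  (forall v, v \in vs -> goodb k d (std v)) -> Hpm k (std (flatten vs)).
Proof.
move=> U P G.
have E : std (flatten vs) = foldr (if d then oplus else ominus) [::] (map std vs).
  elim: vs P {U G} => // v vs IH; rewrite pairwise_cons => /andP[h1 h2] /=.
  have h := allrel_flatten h1.
  rewrite -IH //; case: d h {IH h1 h2} => h.
    by rewrite std_cat_lt.
  by rewrite std_cat_gt.
case: d P E G => P E G; [left | right]; (split; first exact: std_is_perm);
  exists (map std vs); (split; last by move=> b /mapP[v vv ->]; case: (G v vv)).
  split => //; move=> b /mapP[v vv ->]; by case: (G v vv).
split => //; move=> b /mapP[v vv ->]; by case: (G v vv).
Qed.

Lemma std_rank_sub q s : {subset s <= q} -> std (map (rank q) s) = std s.
Proof. move=> sub; apply: std_mono => x y xs ys; apply: rank_mono; exact: sub. Qed.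

Lemma lift_plus q bs : std q = foldr oplus [::] bs -> (forall b, b \in bs -> is_perm b) ->
  exists qs, [/\ flatten qs = q, map std qs = bs & pairwise (allrel (Rd true)) qs].
Proof.
elim: bs q => [|b bs IH] q E Hb.
  exists [::]; split => //; move: (size_std q); rewrite E /= => /esym/size0nil ->//.
have hb : is_perm b by apply: Hb; rewrite inE eqxx.
have hF : is_perm (foldr oplus [::] bs).
  by apply: foldr_oplus_perm => c cb; apply: Hb; rewrite inE cb orbT.
set F := foldr oplus [::] bs in E hF.
have sz : size b <= size q.
  by rewrite -(size_std q) E /= /oplus size_cat leq_addr.
set q1 := take (size b) q; set q2 := drop (size b) q.
have Eq : std q = map (rank q) q1 ++ map (rank q) q2 by rewrite stdE -map_cat cat_take_drop.
have sz1 : size (map (rank q) q1) = size b by rewrite size_map size_takel.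
move: E; rewrite Eq /= /oplus => /eqP; rewrite eqseq_cat // => /andP[/eqP E1 /eqP E2].
have s1 : {subset q1 <= q} by move=> x; apply: mem_take.
have s2 : {subset q2 <= q} by move=> x; apply: mem_drop.
have A12 : allrel (Rd true) q1 q2.
  apply/allrelP => x y xq yq /=; rewrite -(rank_mono _ (s1 _ xq)).
  have h1 : rank q x < size b.
    by apply: perm_mem_lt => //; rewrite -E1; apply: map_f.
  have : rank q y \in map (addn (size b)) F by rewrite -E2; apply: map_f.
  by case/mapP => z _ ->; apply: leq_trans h1 (leq_addr _ _).
have S1 : std q1 = b by rewrite -(std_rank_sub s1) E1 std_perm_id.
have S2 : std q2 = F by rewrite -(std_rank_sub s2) E2 std_addn std_perm_id.
have Hb' : forall c, c \in bs -> is_perm c by move=> c cb; apply: Hb; rewrite inE cb orbT.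
have [qs [f1 f2 f3]] := IH q2 S2 Hb'.
exists (q1 :: qs); split => /=; first by rewrite f1 cat_take_drop.
  by rewrite S1 f2.
rewrite f3 andbT; apply/allP => v vq; apply: allrel_sub A12 _.
by rewrite -f1; apply: mem_flatten_sub.
Qed.

Lemma lift_minus q bs : std q = foldr ominus [::] bs -> (forall b, b \in bs -> is_perm b) ->
  exists qs, [/\ flatten qs = q, map std qs = bs & pairwise (allrel (Rd false)) qs].
Proof.
elim: bs q => [|b bs IH] q E Hb.
  exists [::]; split => //; move: (size_std q); rewrite E /= => /esym/size0nil ->//.
have hb : is_perm b by apply: Hb; rewrite inE eqxx.
have hF : is_perm (foldr ominus [::] bs).
  by apply: foldr_ominus_perm => c cb; apply: Hb; rewrite inE cb orbT.
set F := foldr ominus [::] bs in E hF.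
have sz : size b <= size q.
  by rewrite -(size_std q) E /= /ominus size_cat size_map leq_addr.
set q1 := take (size b) q; set q2 := drop (size b) q.
have Eq : std q = map (rank q) q1 ++ map (rank q) q2 by rewrite stdE -map_cat cat_take_drop.
have sz1 : size (map (rank q) q1) = size (map (addn (size F)) b) by rewrite !size_map size_takel.
have E' : std q = map (addn (size F)) b ++ F by rewrite E.
move: E'; rewrite Eq => /eqP; rewrite eqseq_cat // => /andP[/eqP E1 /eqP E2].
have s1 : {subset q1 <= q} by move=> x; apply: mem_take.
have s2 : {subset q2 <= q} by move=> x; apply: mem_drop.
have A12 : allrel (Rd false) q1 q2.
  apply/allrelP => x y xq yq /=; rewrite -(rank_mono _ (s2 _ yq)).
  have h1 : rank q y < size F.
    by apply: perm_mem_lt => //; rewrite -E2; apply: map_f.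
  have : rank q x \in map (addn (size F)) b by rewrite -E1; apply: map_f.
  by case/mapP => z _ ->; apply: leq_trans h1 (leq_addr _ _).
have S1 : std q1 = b by rewrite -(std_rank_sub s1) E1 std_addn std_perm_id.
have S2 : std q2 = F by rewrite -(std_rank_sub s2) E2 std_perm_id.
have Hb' : forall c, c \in bs -> is_perm c by move=> c cb; apply: Hb; rewrite inE cb orbT.
have [qs [f1 f2 f3]] := IH q2 S2 Hb'.
exists (q1 :: qs); split => /=; first by rewrite f1 cat_take_drop.
  by rewrite S1 f2.
rewrite f3 andbT; apply/allP => v vq; apply: allrel_sub A12 _.
by rewrite -f1; apply: mem_flatten_sub.
Qed.

Lemma piece_blocks k q : Hpm k (std q) ->
  exists d qs, [/\ flatten qs = q, pairwise (allrel (Rd d)) qs &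
     forall u, u \in qs -> goodb k d (std u)].
Proof.
case=> [[_ [bs [[E G1 G2] G3]]] | [_ [bs [[E G1 G2] G3]]]].
  have [qs [f1 f2 f3]] := lift_plus E (fun b bb => (G1 b bb).1).
  exists true, qs; split => // u uq.
  have ub : std u \in bs by rewrite -f2; apply: map_f.
  by split; [exact: (G1 _ ub).1 | exact: (G1 _ ub).2 | exact: G2 | exact: G3].
have [qs [f1 f2 f3]] := lift_minus E (fun b bb => (G1 b bb).1).
exists false, qs; split => // u uq.
have ub : std u \in bs by rewrite -f2; apply: map_f.
by split; [exact: (G1 _ ub).1 | exact: (G1 _ ub).2 | exact: G2 | exact: G3].
Qed.

Lemma size_inv p : size (Defs.inv p) = size p.
Proof. by rewrite size_map size_iota. Qed.

Lemma filter_iota_sorted vs n : sorted ltn vs -> all (fun v => v < n) vs ->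
  filter (fun v => v \in vs) (iota 0 n) = vs.
Proof.
move=> svs avs; apply: (@irr_sorted_eq _ ltn ltn_trans ltnn).
- apply: (@sorted_filter _ ltn ltn_trans). exact: iota_ltn_sorted.
- exact: svs.
- move=> x; rewrite mem_filter mem_iota add0n /=.
  case xv: (x \in vs) => //=; exact: (allP avs x xv).
Qed.

Lemma alt_bound p vs (hi : pred nat) : is_perm p -> sorted ltn vs ->
  all (fun v => v \in p) vs ->
  (forall i, i < size vs -> hi (nth 0 vs i) = ~~ odd i) ->
  (forall a b, a \in vs -> b \in vs -> hi a -> ~~ hi b -> index b p < index a p) ->
  size vs <= al p.
Proof.
move=> pp svs avs Halt Hpos.
set n := size p.
have avn : all (fun v => v < n) vs.
  by apply/allP => v vv; apply: perm_mem_lt => //; exact: (allP avs v vv).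
have szv : size vs < n.+1.
  rewrite ltnS -(size_iota 0 n); apply: uniq_leq_size; first exact: (@sorted_uniq _ ltn ltn_trans ltnn _ svs).
  by move=> v vv; rewrite mem_iota add0n (allP avn v vv).
set m := map (fun v => v \in vs) (iota 0 n).
have szm : size m == size (Defs.inv p) by rewrite size_map size_iota size_inv.
set t := @Tuple (size (Defs.inv p)) bool m szm.
have Er : restr (Defs.inv p) t = std (map (index^~ p) vs).
  rewrite /restr /= /inv -map_mask /m -filter_mask filter_iota_sorted //.
set s := map (index^~ p) vs in Er.
have alt : alt_of_len (Defs.inv p) (size vs).
  apply/existsP; exists t; rewrite Er size_std size_map eqxx /=.
  apply/forallP => -[i ilt]; apply/forallP => -[j jlt] /=; apply/implyP => /andP[ei oj].
  have szs : size (std s) = size vs by rewrite size_std size_map.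
  have iv : i < size vs by rewrite -szs.
  have jv : j < size vs by rewrite -szs.
  rewrite stdE (nth_map 0) ?size_map // (nth_map 0) ?size_map //.
  rewrite rank_mono; last by apply: mem_nth; rewrite size_map.
  rewrite /s (nth_map 0) // (nth_map 0) //; apply: Hpos; rewrite ?mem_nth //.
    by rewrite Halt.
  by rewrite Halt // oj.
rewrite /al; apply: (leq_bigmax_cond (Ordinal szv)) => /=.
by rewrite alt orbT.
Qed.

Definition flp (prs : seq (nat * nat)) := flatten [seq [:: pr.1; pr.2] | pr <- prs].

Lemma flp_cons pr prs : flp (pr :: prs) = pr.1 :: pr.2 :: flp prs.
Proof. by []. Qed.

Lemma size_flp prs : size (flp prs) = (size prs).*2.
Proof. by elim: prs => // pr prs IH; rewrite flp_cons /= IH doubleS. Qed.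

Lemma nth_chain (P : pred nat) prs z0 i : P z0 ->
  (forall pr, pr \in prs -> ~~ P pr.1 && P pr.2) ->
  i < size (z0 :: flp prs) -> P (nth 0 (z0 :: flp prs) i) = ~~ odd i.
Proof.
elim: prs z0 i => [|pr prs IH] z0 i Pz H.
  by rewrite /= ltnS leqn0 => /eqP->.
rewrite flp_cons; case: i => [|[|i]] //=.
  by move: (H pr (mem_head _ _)) => /andP[/negPf -> _].
rewrite !ltnS negbK => hi; rewrite (IH pr.2 i) //.
  by move: (H pr (mem_head _ _)) => /andP[_ ->].
by move=> pr' pin; apply: H; rewrite inE pin orbT.
Qed.

Lemma nth_flp (P : pred nat) prs i :
  (forall pr, pr \in prs -> P pr.1 && ~~ P pr.2) ->
  i < size (flp prs) -> P (nth 0 (flp prs) i) = ~~ odd i.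
Proof.
elim: prs i => [|pr prs IH] i H //.
rewrite flp_cons; case: i => [|[|i]] //=.
- by move: (H pr (mem_head _ _)) => /andP[-> _].
- by move: (H pr (mem_head _ _)) => /andP[_ /negPf ->].
rewrite !ltnS negbK => hi; rewrite (IH i) //.
by move=> pr' pin; apply: H; rewrite inE pin orbT.
Qed.

Lemma mem_flp b prs : b \in flp prs -> exists2 pr, pr \in prs & (b = pr.1) \/ (b = pr.2).
Proof.
elim: prs => [|pr prs IH] //; rewrite flp_cons !inE => /orP[/eqP->|/orP[/eqP->|bin]].
- by exists pr; [rewrite mem_head | left].
- by exists pr; [rewrite mem_head | right].
by have [pr' pin h] := IH bin; exists pr' => //; rewrite inE pin orbT.
Qed.

Lemma path_flp_filter d (P : pred (nat * nat)) z0 prs :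
  path (Rd d) z0 (flp prs) -> path (Rd d) z0 (flp (filter P prs)).
Proof.
elim: prs z0 => [|pr prs IH] z0 //; rewrite flp_cons /= => /and3P[h1 h2 h3].
case: (P pr); first by rewrite flp_cons /= h1 h2 /= IH.
apply: (path_le (@Rd_trans d) (Rd_trans h1 h2)); exact: IH.
Qed.

Lemma alt_bound_d d p vs (hi : pred nat) : is_perm p -> sorted (Rd d) vs ->
  (d = false -> odd (size vs)) ->
  all (fun v => v \in p) vs ->
  (forall i, i < size vs -> hi (nth 0 vs i) = ~~ odd i) ->
  (forall a b, a \in vs -> b \in vs -> hi a -> ~~ hi b -> index b p < index a p) ->
  size vs <= al p.
Proof.
case: d => pp svs ods avs Halt Hpos; first exact: (alt_bound pp svs avs Halt Hpos).
rewrite -size_rev; apply: (alt_bound (hi := hi) pp).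
- by rewrite rev_sorted.
- by rewrite all_rev.
- move=> i; rewrite size_rev => iv; rewrite nth_rev // Halt; last first.
    by rewrite subnSK // leq_subr.
  by rewrite oddB // (ods erefl) /= negbK.
- by move=> a b; rewrite !mem_rev; apply: Hpos.
Qed.

Lemma uniq3 (L q R : seq nat) : uniq (L ++ q ++ R) ->
  [/\ forall x, x \in q -> x \notin L, forall x, x \in q -> x \notin R &
      forall x, x \in L -> x \notin R].
Proof.
rewrite !cat_uniq has_cat negb_or => /and3P[_ /andP[h2 h1] /and3P[_ h3 _]]; split.
- by move=> x xq; apply/negP => xL; move/hasPn: h2 => /(_ x xq); rewrite xL.
- by move=> x xq; apply/negP => xR; move/hasPn: h3 => /(_ x xR); rewrite xq.
- by move=> x xL; apply/negP => xR; move/hasPn: h1 => /(_ x xR); rewrite xL.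
Qed.

Lemma idx_left (L q R : seq nat) b a : uniq (L ++ q ++ R) -> b \in L -> a \in q ->
  index b (L ++ q ++ R) < index a (L ++ q ++ R).
Proof.
move=> U bL aq; have [h1 _ _] := uniq3 U.
rewrite !index_cat bL (negPf (h1 a aq)); apply: leq_trans (leq_addr _ _).
by rewrite index_mem.
Qed.

Lemma idx_right (L q R : seq nat) b a : uniq (L ++ q ++ R) -> b \in q -> a \in R ->
  index b (L ++ q ++ R) < index a (L ++ q ++ R).
Proof.
move=> U bq aR; have [h1 h2 h3] := uniq3 U.
have aq : a \notin q by apply/negP => aq; move/negP: (h2 a aq); apply.
have aL : a \notin L by apply/negP => aL; move/negP: (h3 a aL); apply.
rewrite !index_cat (negPf (h1 b bq)) (negPf aL) ltn_add2l bq (negPf aq).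
by apply: leq_trans (leq_addr _ _); rewrite index_mem.
Qed.

Lemma ar_fin (a b al K : nat) : a.*2.+1 <= al -> (b = 0 \/ b.*2.-1 <= al) -> al < K -> a + b < K.
Proof. move=> h1 [->|h2] h3; lia. Qed.

Lemma chain_bound d p L q R z0 prs K : is_perm p -> p = L ++ q ++ R -> al p < K ->
  z0 \in q -> path (Rd d) z0 (flp prs) ->
  (forall pr, pr \in prs -> pr.1 \in L ++ R /\ pr.2 \in q) -> size prs < K.
Proof.
move=> pp pE alK z0q pth Hpr.
have U : uniq (L ++ q ++ R) by rewrite -pE; exact: perm_uniq'.
have [d1 d2 d3] := uniq3 U.
have inpq : forall v, v \in q -> v \in p by move=> v vq; rewrite pE !mem_cat vq orbT.
have inpO : forall v, v \in L ++ R -> v \in p.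
  by move=> v; rewrite pE !mem_cat => /orP[->|->]; rewrite ?orbT.
set prsL := filter (fun pr => pr.1 \in L) prs.
set prsR := filter (fun pr => pr.1 \notin L) prs.
have szE : size prs = size prsL + size prsR.
  by rewrite !size_filter -(count_predC (fun pr => pr.1 \in L)).
have HL : forall pr, pr \in prsL -> pr.1 \in L /\ pr.2 \in q.
  move=> pr; rewrite mem_filter => /andP[h1 h2]; split => //; exact: (Hpr pr h2).2.
have HR : forall pr, pr \in prsR -> pr.1 \in R /\ pr.2 \in q.
  move=> pr; rewrite mem_filter => /andP[h1 h2]; have [h3 h4] := Hpr pr h2; split => //.
  by move: h3; rewrite mem_cat (negPf h1).
have bL : (size prsL).*2.+1 <= al p.
  have := @alt_bound_d d p (z0 :: flp prsL) (fun v => v \in q) pp.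
  rewrite /= size_flp; apply.
  - exact: path_flp_filter.
  - by rewrite odd_double.
  - rewrite inpq //=; apply/allP => v /mem_flp[pr /HL[h1 h2] [->|->]]; last exact: inpq.
    by apply: inpO; rewrite mem_cat h1.
  - move=> i hi; apply: nth_chain; [by [] | | by rewrite /= size_flp].
    move=> pr /HL[h1 h2]; apply/andP; split => //.
    by apply/negP => h; move/negP: (d1 _ h); apply.
  - move=> a b; rewrite !inE => _ /orP[/eqP->|bf] aq; first by rewrite z0q.
    move=> bq; have [pr /HL[h1 h2] [bE|bE]] := mem_flp bf; last by move: bq; rewrite bE h2.
    by rewrite pE; apply: idx_left U _ aq; rewrite bE.
have bR : size prsR = 0 \/ (size prsR).*2.-1 <= al p.
  case E0: (size prsR) => [|m]; [by left | right].
  have Hs : (size prsR).*2.-1 <= size (flp prsR) by rewrite size_flp leq_pred.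
  have := @alt_bound_d d p (take (size prsR).*2.-1 (flp prsR)) (fun v => v \in R) pp.
  rewrite size_takel // E0; apply.
  - apply: take_sorted.
    exact: path_sorted (path_flp_filter _ pth).
  - by rewrite doubleS /= odd_double.
  - apply/allP => v /mem_take /mem_flp[pr /HR[h1 h2] [->|->]]; last exact: inpq.
    by apply: inpO; rewrite mem_cat h1 orbT.
  - move=> i hi; rewrite nth_take; last exact: hi.
    apply: nth_flp; last by apply: leq_trans hi _; rewrite -E0.
    move=> pr /HR[h1 h2]; apply/andP; split; [exact: h1 | exact: d2 _ h2].
  - move=> a b /mem_take af /mem_take bf aR bR.
    have [pr /HR[h1 h2] [bE|bE]] := mem_flp bf; first by rewrite bE h1 in bR.
    by rewrite pE; apply: idx_right U _ aR; rewrite bE.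
rewrite szE; exact: ar_fin bL bR alK.
Qed.

Definition betw d (c : seq nat) x := has (fun a => Rd d a x) c && has (fun b => Rd d x b) c.

Definition chunk_ok d (O W : seq nat) (G : seq nat -> Prop) (c : seq nat) : Prop :=
  [/\ c != [::], (forall x, x \in O -> ~~ betw d c x),
      (forall x, x \in W -> x \notin c -> ~~ betw d c x) &
      exists vs, [/\ c = flatten vs, (forall v, v \in vs -> G v) & pairwise (allrel (Rd d)) vs]].


Definition chain_ok d (O W : seq nat) z0 (prs : seq (nat * nat)) : Prop :=
  [/\ z0 \in W, path (Rd d) z0 (flp prs) &
      forall pr, pr \in prs -> pr.1 \in O /\ pr.2 \in W].

Lemma betw_single d a x : betw d [:: a] x = false.
Proof. rewrite /betw /= !orbF; apply/negbTE/negP => /andP[h1 h2]; exact: Rd_asym h1 h2. Qed.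

Lemma notbetw_below d c x : (forall a, a \in c -> ~~ Rd d a x) -> ~~ betw d c x.
Proof. move=> H; rewrite /betw negb_and; apply/orP; left; apply/hasPn => a ac; exact: H. Qed.

Lemma notbetw_above d c x : (forall a, a \in c -> ~~ Rd d x a) -> ~~ betw d c x.
Proof. move=> H; rewrite /betw negb_and; apply/orP; right; apply/hasPn => a ac; exact: H. Qed.

Lemma flatten_single (u : seq nat) : flatten [seq [:: a] | a <- u] = u.
Proof. by elim: u => //= a u ->. Qed.

Lemma pairwise_take_drop d (us : seq (seq nat)) j :
  pairwise (allrel (Rd d)) us -> allrel (Rd d) (flatten (take j us)) (flatten (drop j us)).
Proof.
elim: us j => [|u us IH] [|j] //= /andP[h1 h2]; rewrite ?allrel_catl ?IH // ?andbT.
apply: allrel_sub (allrel_flatten h1) _ => x /flattenP[v vd xv].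
by apply/flattenP; exists v => //; apply: mem_drop vd.
Qed.

Lemma old_ok d O W' G u c : allrel (Rd d) u W' -> {subset c <= W'} ->
  chunk_ok d O W' G c -> chunk_ok d O (u ++ W') G c.
Proof.
move=> /allrelP A sub [h1 h2 h3 h4]; split => // x; rewrite mem_cat => /orP[xu|xW]; last exact: h3.
move=> _; apply: notbetw_below => a ac; apply/negP => ax.
by apply: Rd_asym ax (A x a xu (sub a ac)).
Qed.



Lemma single_ok d O W (G : seq nat -> Prop) a : G [:: a] -> chunk_ok d O W G [:: a].
Proof.
move=> Ga; split => //; try by move=> x _; rewrite betw_single.
by exists [:: [:: a]]; split => // v; rewrite inE => /eqP->.
Qed.

Lemma singles_ok d O W (G : seq nat -> Prop) (u : seq nat) : (forall a, G [:: a]) ->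
  forall c, c \in [seq [:: a] | a <- u] -> chunk_ok d O W G c.
Proof. by move=> HG c /mapP[a _ ->]; apply: single_ok. Qed.

Lemma ar1 (a c k m : nat) (f : bool) : a < k -> c <= k.+1 * m + f -> a + c <= k.+1 * m.+1 + false.
Proof. rewrite mulnS; case: f => /=; lia. Qed.
Lemma ar2 (c k m : nat) : c <= k.+1 * m + false -> c.+1 <= k.+1 * m + true.
Proof. lia. Qed.
Lemma ar4 (c k m : nat) : c <= k.+1 * m + true -> c.+1 <= k.+1 * m.+1 + true.
Proof. rewrite mulnS; lia. Qed.

Lemma chunking d k (O : seq nat) (G : seq nat -> Prop) u us :
  (forall v, v \in u :: us -> [/\ G v, v != [::] & size v < k]) ->
  (forall a, G [:: a]) ->
  pairwise (allrel (Rd d)) (u :: us) ->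
  (forall x, x \in O -> x \notin flatten (u :: us)) ->
  exists cs z0 prs (flag : bool),
   [/\ flatten cs = flatten (u :: us),
       forall c, c \in cs -> chunk_ok d O (flatten (u :: us)) G c,
       size cs <= k.+1 * size prs + flag,
       chain_ok d O (flatten (u :: us)) z0 prs &
       flag -> exists j c0 cs', [/\ cs = c0 :: cs', z0 \in c0,
                      c0 = flatten (take j (u :: us)) & 0 < j]].
Proof.
elim: us u => [|u' us IH] u HV HG HP HO.
  have [Gu un uk] := HV u (mem_head _ _).
  case: (boolP (has (betw d u) O)) => [/hasP[x xO /andP[/hasP[a au ax] /hasP[b bu xb]]] | cl].
    exists [seq [:: a] | a <- u], a, [:: (x, b)], false; split => /=.
    - by rewrite flatten_single cats0.
    - exact: singles_ok.
    - by rewrite size_map muln1 addn0 ltnW // ltnW.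
    - split; first by rewrite /= cats0.
        by rewrite /flp /= ax xb.
      by move=> pr; rewrite inE => /eqP-> /=; rewrite cats0 xO bu.
    - by [].
  have [a au] : exists a, a \in u by case: u un {HV uk cl HP HO Gu} => // a u _; exists a; rewrite mem_head.
  exists [:: u], a, [::], true; split => /=.
  - by rewrite cats0.
  - move=> c; rewrite inE => /eqP->; split => //.
    + by move=> x xO; move/hasPn: cl; apply.
    + by move=> x; rewrite cats0 => ->.
    + by exists [:: u]; split; rewrite /= ?cats0 // => v; rewrite inE => /eqP->.
  - by rewrite muln0.
  - by split; rewrite ?cats0.
  - by move=> _; exists 1, u, [::]; rewrite /= cats0.
have HV' : forall v, v \in u' :: us -> [/\ G v, v != [::] & size v < k].
  by move=> v vin; apply: HV; rewrite inE vin orbT.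
move: (HP); rewrite pairwise_cons => /andP[HPu HP'].
have HO' : forall x, x \in O -> x \notin flatten (u' :: us).
  move=> x xO; apply/negP => xW; move/negP: (HO x xO); apply.
  by rewrite [flatten (u :: _)]/= mem_cat xW orbT.
have [cs [z0 [prs [flag [F1 F2 F3 [C1 C2 C3] F5]]]]] := IH u' HV' HG HP' HO'.
set W' := flatten (u' :: us) in F1 F2 C1 C3 HO' F5 *.
have AuW : allrel (Rd d) u W' := allrel_flatten HPu.
have Wdef : flatten (u :: u' :: us) = u ++ W' by [].
rewrite Wdef.
have [Gu un uk] := HV u (mem_head _ _).
have oldok : forall c, c \in cs -> chunk_ok d O (u ++ W') G c.
  move=> c cc; apply: old_ok AuW _ (F2 c cc) => x xc; rewrite -F1; apply/flattenP; by exists c.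
have below : forall a, a \in u -> Rd d a z0 by move=> a au; exact: (allrelP AuW a z0 au C1).
have chainW : forall pr, pr \in prs -> pr.1 \in O /\ pr.2 \in u ++ W'.
  by move=> pr prin; have [h1 h2] := C3 pr prin; rewrite mem_cat h2 orbT.
case: (boolP (has (betw d u) O)) => [/hasP[x xO /andP[/hasP[a au ax] /hasP[b bu xb]]] | cl].
  exists ([seq [:: a] | a <- u] ++ cs), a, ((x, b) :: prs), false; split.
  - by rewrite flatten_cat flatten_single F1.
  - move=> c; rewrite mem_cat => /orP[cu|ccs]; first exact: singles_ok cu.
    exact: oldok.
  - rewrite size_cat size_map; exact: (ar1 uk F3).
  - split; first by rewrite mem_cat au.
      rewrite /flp /= ax xb /=; apply: (path_le (@Rd_trans d) (below b bu)); exact: C2.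
    move=> pr; rewrite inE => /orP[/eqP-> /=|prin]; last exact: chainW.
    by rewrite xO mem_cat bu.
  - by [].
have clu : forall x, x \in O -> ~~ betw d u x by move=> x xO; move/hasPn: cl; apply.
have [a au] : exists a, a \in u by case: (u) un => // a' u'' _; exists a'; rewrite mem_head.
have uok : chunk_ok d O (u ++ W') G u.
  split => // [x xW xu|].
    apply: notbetw_above => b bu; apply/negP => xb.
    move: xW; rewrite mem_cat (negPf xu) /= => xW.
    exact: Rd_asym xb (allrelP AuW b x bu xW).
  by exists [:: u]; split; rewrite /= ?cats0 // => v; rewrite inE => /eqP->.
case: flag F3 F5 => F3 F5; last first.
  exists (u :: cs), a, prs, true; split.
  - by rewrite /= F1.
  - move=> c; rewrite inE => /orP[/eqP->|ccs]; [exact: uok | exact: oldok].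
  - exact: ar2.
  - split; first by rewrite mem_cat au.
      by apply: (path_le (@Rd_trans d) (below a au)); exact: C2.
    exact: chainW.
  - by move=> _; exists 1, u, cs; rewrite /= cats0.
have [j [c0 [cs' [E0 z0c0 c0E j0]]]] := F5 isT.
have [c0n c0O c0W [vs0 [vsE vsG vsP]]] : chunk_ok d O W' G c0 by apply: F2; rewrite E0 mem_head.
have c0sub : {subset c0 <= W'} by move=> y; rewrite c0E => /flattenP[v vt yv]; apply/flattenP; exists v => //; apply: mem_take vt.
case: (boolP (has (fun x => has (fun a => Rd d a x) u && has (fun b => Rd d x b) c0) O))
  => [/hasP[x xO /andP[/hasP[a' au' ax] /hasP[b bc0 xb]]] | gcl].
  have xz0 : Rd d x z0.
    have nb := c0O x xO; move: nb; rewrite /betw negb_and => /orP[/hasPn nb|/hasPn nb]; last first.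
      by have := nb b bc0; rewrite xb.
    have nz : z0 != x.
      by apply/negP => /eqP ez; move/negP: (HO' x xO); apply; rewrite -ez C1.
    by have := Rd_total d nz; rewrite (negPf (nb z0 z0c0)).
  exists (u :: cs), a', ((x, z0) :: prs), true; split.
  - by rewrite /= F1.
  - move=> c; rewrite inE => /orP[/eqP->|ccs]; [exact: uok | exact: oldok].
  - exact: ar4.
  - split; first by rewrite mem_cat au'.
      by rewrite /flp /= ax xz0 /=; exact: C2.
    move=> pr; rewrite inE => /orP[/eqP-> /=|prin]; last exact: chainW.
    by rewrite xO mem_cat C1 orbT.
  - by move=> _; exists 1, u, cs; rewrite /= cats0.
have gcl' : forall x, x \in O -> ~~ (has (fun a => Rd d a x) u && has (fun b => Rd d x b) c0).
  by move=> x xO; move/hasPn: gcl; apply.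
exists ((u ++ c0) :: cs'), a, prs, true; split.
- by rewrite /= -catA; move: F1; rewrite E0 /= => ->.
- move=> c; rewrite inE => /orP[/eqP->|ccs]; last by apply: oldok; rewrite E0 inE ccs orbT.
  split.
  + by case: (u) un.
  + move=> x xO; rewrite /betw !has_cat.
    case Hxu: (has (fun b => Rd d x b) u).
      case/hasP: Hxu => b bu xb.
      case Hau: (has (fun a => Rd d a x) u).
        by have := clu x xO; rewrite /betw Hau /= => /hasPn/(_ b bu); rewrite xb.
      case Hac: (has (fun a => Rd d a x) c0) => //=.
      case/hasP: Hac => a' a'c0 a'x.
      exfalso; apply: (Rd_asym (Rd_trans a'x xb)); exact: (allrelP AuW b a' bu (c0sub a' a'c0)).
    rewrite /=.
    case Hau: (has (fun a => Rd d a x) u) => /=.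
      by have := gcl' x xO; rewrite Hau.
    exact: c0O.
  + move=> x; rewrite mem_cat => /orP[xu|xW]; first by rewrite mem_cat xu.
    rewrite mem_cat negb_or => /andP[xu xc0].
    have xdrop : x \in flatten (drop j (u' :: us)).
      move: xW xc0; rewrite /W' -{1}(cat_take_drop j (u' :: us)) flatten_cat mem_cat c0E.
      by case/orP => [->|].
    apply: notbetw_above => y; rewrite mem_cat => /orP[yu|yc0]; apply/negP => xy.
      exact: Rd_asym xy (allrelP AuW y x yu xW).
    have := allrelP (pairwise_take_drop j HP') y x; rewrite -c0E => /(_ yc0 xdrop) yx.
    exact: Rd_asym xy yx.
  + exists (u :: vs0); split; first by rewrite /= vsE.
      by move=> v; rewrite inE => /orP[/eqP->|vv]; [exact: Gu | exact: vsG].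
    rewrite /= vsP andbT; apply/allP => v vv; apply: allrel_sub AuW _.
    by move=> y yv; apply: c0sub; rewrite vsE; apply/flattenP; exists v.
- by move: F3; rewrite E0 /=.
- split; first by rewrite mem_cat au.
    by apply: (path_le (@Rd_trans d) (below a au)); exact: C2.
  exact: chainW.
- by move=> _; exists j.+1, (u ++ c0), cs'; split => //; rewrite ?mem_cat ?au // c0E.
Qed.

Lemma betw_false c x : betw false c x = betw true c x.
Proof. by rewrite /betw /= andbC. Qed.

Lemma uniq_flatten_mem (cs : seq (seq nat)) c : uniq (flatten cs) -> c \in cs -> uniq c.
Proof.
elim: cs => //= c' cs IH; rewrite cat_uniq inE => /and3P[u1 _ u2] /orP[/eqP->//|cc].
exact: IH.
Qed.

Lemma goodb_single k d a : 2 <= k -> goodb k d (std [:: a]).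
Proof.
move=> k2; rewrite /std /= ltnn /=; split => //.
case: d => -[s [t [_ _ sn tn E]]]; move: (congr1 size E);
  rewrite ?size_cat ?size_map /=; case: s sn {E} => // ? ?; case: t tn => //= ? ? _ _; lia.
Qed.

Definition good_chunk k (p c : seq nat) : Prop :=
  [/\ c != [::], Hpm k (std c) & forall x, x \in p -> x \notin c -> ~~ betw true c x].

Lemma ar_piece (k K m s : nat) (f : bool) : m < K -> s <= k.+1 * m + f -> s <= k.+1 * K.
Proof. move=> h1 h2; have : k.+1 * m.+1 <= k.+1 * K by rewrite leq_mul2l h1 orbT.
rewrite mulnS; case: f h2 => /=; lia. Qed.

Lemma piece_chunks k K p L q R : 2 <= k -> is_perm p -> p = L ++ q ++ R -> al p < K ->
  q != [::] -> Hpm k (std q) ->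
  exists cs, [/\ flatten cs = q, size cs <= k.+1 * K & forall c, c \in cs -> good_chunk k p c].
Proof.
move=> k2 pp pE alK qn Hq.
have U : uniq (L ++ q ++ R) by rewrite -pE; exact: perm_uniq'.
have [d1 d2 d3] := uniq3 U.
have Uq : uniq q by move: U; rewrite !cat_uniq => /and3P[_ _ /and3P[]].
have [d [qs [qE qP qG]]] := piece_blocks Hq.
case: qs qE qP qG => [|u us] qE qP qG; first by rewrite -qE in qn.
set G := fun v => goodb k d (std v).
have HV : forall v, v \in u :: us -> [/\ G v, v != [::] & size v < k].
  move=> v vin; have [g1 g2 g3 g4] := qG v vin; split => //.
    by apply/negP => /eqP vE; apply: g2; rewrite vE.
  by rewrite -(size_std v).
have HG : forall a, G [:: a] by move=> a; exact: goodb_single.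
have HO : forall x, x \in L ++ R -> x \notin flatten (u :: us).
  move=> x; rewrite qE mem_cat => /orP[xL|xR]; apply/negP => xq.
    by move/negP: (d1 x xq); apply.
  by move/negP: (d2 x xq); apply.
have [cs [z0 [prs [flag [F1 F2 F3 [C1 C2 C3] _]]]]] := chunking HV HG qP HO.
rewrite qE in F1 F2 C1 C3.
have Hpr : forall pr, pr \in prs -> pr.1 \in L ++ R /\ pr.2 \in q by move=> pr /C3.
have szK := chain_bound pp pE alK C1 C2 Hpr.
exists cs; split => //; first exact: ar_piece szK F3.
move=> c cc; have [c1 c2 c3 [vs [cE vsG vsP]]] := F2 c cc; split => //.
  rewrite cE; apply: (@run_Hpm k d vs) => //; rewrite -cE.
  by apply: (@uniq_flatten_mem cs); rewrite ?F1.
move=> x; rewrite pE !mem_cat => /or3P[xL|xq|xR] xc.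
- have xO : x \in L ++ R by rewrite mem_cat xL.
  by have := c2 x xO; case: (d) => //; rewrite betw_false.
- by have := c3 x xq xc; case: (d) => //; rewrite betw_false.
- have xO : x \in L ++ R by rewrite mem_cat xR orbT.
  by have := c2 x xO; case: (d) => //; rewrite betw_false.
Qed.

Lemma assemble k K p ps L : 2 <= k -> is_perm p -> al p < K ->
  p = L ++ flatten ps -> (forall q, q \in ps -> q != [::] /\ Hpm k (std q)) ->
  exists cs, [/\ flatten cs = flatten ps, size cs <= k.+1 * K * size ps &
                 forall c, c \in cs -> good_chunk k p c].
Proof.
move=> k2 pp alK; elim: ps L => [|q ps IH] L pE Hps.
  by exists [::].
have [qn Hq] := Hps q (mem_head _ _).
have [cs1 [E1 S1 G1]] := piece_chunks k2 pp pE alK qn Hq.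
have pE' : p = (L ++ q) ++ flatten ps by rewrite pE /= catA.
have Hps' : forall q', q' \in ps -> q' != [::] /\ Hpm k (std q').
  by move=> q' qin; apply: Hps; rewrite inE qin orbT.
have [cs2 [E2 S2 G2]] := IH (L ++ q) pE' Hps'.
exists (cs1 ++ cs2); split.
- by rewrite flatten_cat E1 E2.
- by rewrite size_cat /= mulnS leq_add.
- by move=> c; rewrite mem_cat => /orP[/G1|/G2].
Qed.

Lemma ar_take (a b n : nat) : a < b -> b <= n -> 0 < (if b - a < n - a then b - a else n - a).
Proof. by move=> h1 h2; case: ifP => _; lia. Qed.

Lemma greedy_pieces k p a r : greedy k p a r ->
  exists ps, [/\ flatten ps = drop a p, size ps = r &
                 forall q, q \in ps -> q != [::] /\ Hpm k (std q)].
Proof.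
elim=> [|a' b r' ab bp Hs _ _ [ps [E1 E2 E3]]].
  by exists [::]; rewrite drop_size.
exists (take (b - a') (drop a' p) :: ps); split => /=.
- rewrite E1; have -> : drop b p = drop (b - a') (drop a' p) by rewrite drop_drop subnK // ltnW.
  by rewrite cat_take_drop.
- by rewrite E2.
move=> q; rewrite inE => /orP[/eqP->|]; last exact: E3.
split => //; rewrite -size_eq0 -lt0n size_take size_drop; exact: ar_take ab bp.
Qed.

Lemma disj_nth (cs : seq (seq nat)) i j x : uniq (flatten cs) -> i < size cs -> j < size cs ->
  i != j -> x \in nth [::] cs i -> x \in nth [::] cs j -> False.
Proof.
elim: cs i j => [|c cs IH] [|i] [|j] //= U; move: (U); rewrite cat_uniq => /and3P[_ h U'].
- move=> _ jl _ xc xj; move/hasPn: h => /(_ x) h.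
  have : x \in flatten cs by apply/flattenP; exists (nth [::] cs j) => //; apply: mem_nth.
  by move/h; rewrite /= xc.
- move=> il _ _ xi xc; move/hasPn: h => /(_ x) h.
  have : x \in flatten cs by apply/flattenP; exists (nth [::] cs i) => //; apply: mem_nth.
  by move/h; rewrite /= xc.
- by rewrite !ltnS => il jl ij; apply: IH.
Qed.

Lemma head_mem (c : seq nat) : c != [::] -> head 0 c \in c.
Proof. by case: c => // a c _; rewrite mem_head. Qed.

Lemma not_betw_cases c y : y \notin c -> ~~ betw true c y ->
  (forall a, a \in c -> y < a) \/ (forall a, a \in c -> a < y).
Proof.
move=> yc; rewrite /betw negb_and => /orP[/hasPn h|/hasPn h]; [left|right] => a ac.
  have := h a ac; rewrite /= -leqNgt leq_eqVlt => /orP[/eqP ya|//].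
  by move: yc; rewrite ya ac.
have := h a ac; rewrite /= -leqNgt leq_eqVlt => /orP[/eqP ya|//].
by move: yc; rewrite -ya ac.
Qed.

Lemma chunk_sides c d : c != [::] -> d != [::] -> (forall y, y \in d -> y \notin c) ->
  (forall y, y \in d -> ~~ betw true c y) -> (forall x, x \in c -> ~~ betw true d x) ->
  head 0 d < head 0 c -> forall y x, y \in d -> x \in c -> y < x.
Proof.
move=> cn dn disj Hc Hd hdc y x yd xc.
have hdm := head_mem dn; have hcm := head_mem cn.
case: (not_betw_cases (disj y yd) (Hc y yd)) => [h|h]; first exact: h.
exfalso.
have hcd : head 0 c \notin d by apply/negP => hd; move/negP: (disj _ hd); apply.
case: (not_betw_cases hcd (Hd _ hcm)) => h'.
  by have := h' _ hdm; rewrite ltnNge ltnW.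
by have := h' _ yd; rewrite ltnNge ltnW // h.
Qed.

Lemma count_lt_perm p x : is_perm p -> x \in p -> count (fun y => y < x) p = x.
Proof.
move=> pp xp; have /permP -> := pp; apply: count_lt_iota; apply: ltnW; exact: perm_mem_lt.
Qed.

Lemma inflate_ok k p cs : is_perm p -> flatten cs = p ->
  (forall c, c \in cs -> good_chunk k p c) ->
  [/\ is_perm (std (map (head 0) cs)), size (std (map (head 0) cs)) = size cs &
      p = inflate (std (map (head 0) cs)) (map std cs)].
Proof.
move=> pp pE Hg.
have U : uniq (flatten cs) by rewrite pE; exact: perm_uniq'.
set m := size cs; set H := map (head 0) cs; set sg := std H.
have cin : forall j, j < m -> nth [::] cs j \in cs by move=> j jm; apply: mem_nth.
have cn : forall j, j < m -> nth [::] cs j != [::] by move=> j jm; case: (Hg _ (cin j jm)).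
have hin : forall j, j < m -> head 0 (nth [::] cs j) \in nth [::] cs j.
  by move=> j jm; apply: head_mem; apply: cn.
have Hn : forall j, j < m -> nth 0 H j = head 0 (nth [::] cs j) by move=> j jm; rewrite (nth_map [::]).
have inp : forall j y, j < m -> y \in nth [::] cs j -> y \in p.
  by move=> j y jm yj; rewrite -pE; apply/flattenP; exists (nth [::] cs j) => //; apply: cin.
have UH : uniq H.
  apply/(uniqP 0) => i j; rewrite !inE /= size_map => im jm; rewrite !Hn // => e.
  case: (eqVneq i j) => // ij; exfalso; apply: (disj_nth U im jm ij (hin i im)); rewrite e; exact: hin.
have szsg : size sg = m by rewrite size_std size_map.
have sgn : forall j, j < m -> nth 0 sg j = rank H (head 0 (nth [::] cs j)).
  by move=> j jm; rewrite /sg stdE (nth_map 0) ?size_map // Hn.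
have sglt : forall i j, i < m -> j < m -> (nth 0 sg j < nth 0 sg i) = (head 0 (nth [::] cs j) < head 0 (nth [::] cs i)).
  move=> i j im jm; rewrite !sgn // rank_mono //; rewrite -Hn //; apply: mem_nth; rewrite size_map //.
have side : forall i j y x, i < m -> j < m -> i != j -> y \in nth [::] cs j -> x \in nth [::] cs i ->
    (head 0 (nth [::] cs j) < head 0 (nth [::] cs i)) = (y < x).
  move=> i j y x im jm ij yj xi.
  have dji : forall y, y \in nth [::] cs j -> y \notin nth [::] cs i.
    by move=> z zj; apply/negP => zi; apply: (disj_nth U im jm ij zi zj).
  have dij : forall y, y \in nth [::] cs i -> y \notin nth [::] cs j.
    by move=> z zi; apply/negP => zj; apply: (disj_nth U im jm ij zi zj).
  have [_ _ Ci] := Hg _ (cin i im); have [_ _ Cj] := Hg _ (cin j jm).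
  have Hc : forall y, y \in nth [::] cs j -> ~~ betw true (nth [::] cs i) y.
    by move=> z zj; apply: Ci; [exact: inp zj | exact: dji].
  have Hd : forall y, y \in nth [::] cs i -> ~~ betw true (nth [::] cs j) y.
    by move=> z zi; apply: Cj; [exact: inp zi | exact: dij].
  case: (ltngtP (head 0 (nth [::] cs j)) (head 0 (nth [::] cs i))) => hh.
  - by rewrite (chunk_sides (cn i im) (cn j jm) dji Hc Hd hh yj xi).
  - by rewrite ltnNge ltnW // (chunk_sides (cn j jm) (cn i im) dij Hd Hc hh xi yj).
  - by exfalso; apply: (disj_nth U im jm ij (hin i im)); rewrite -hh; apply: hin.
split => //; first exact: std_is_perm.
rewrite /inflate szsg -{1}pE -{1}(mkseq_nth [::] cs) /mkseq; congr flatten.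
apply/eq_in_map => i; rewrite mem_iota add0n /= => im.
rewrite (nth_map [::]) // stdE -map_comp; apply: esym; apply: (etrans _ (map_id _)).
apply/eq_in_map => x xi /=.
rewrite -{2}(count_lt_perm pp (inp _ _ im xi)) -pE count_flatten sumnE big_map (big_nth [::]).
rewrite -(big_mkord (fun j => nth 0 sg j < nth 0 sg i) (fun j => size (nth [::] (map std cs) j))).
rewrite big_mkcond /= /index_iota subn0.
have iin : i \in iota 0 m by rewrite mem_iota.
rewrite (bigD1_seq i iin (iota_uniq 0 m)) (bigD1_seq i iin (iota_uniq 0 m)) /=.
rewrite ltnn add0n addnC /rank; congr (_ + _).
rewrite [in RHS]big_seq_cond [in LHS]big_seq_cond; apply: eq_bigr => j /andP[].
rewrite mem_iota add0n /= => jm ji.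
rewrite (nth_map [::]) // size_std sglt //.
have ij : i != j by rewrite eq_sym.
case: ifP => hh.
  rewrite -(count_predT (nth [::] cs j)); apply: eq_in_count => y yj /=.
  by rewrite -(side i j y x im jm ij yj xi) hh.
rewrite -(count_pred0 (nth [::] cs j)); apply: eq_in_count => y yj /=.
by rewrite -(side i j y x im jm ij yj xi) hh.
Qed.

Lemma ar_N (k K r m : nat) : r < K -> m <= k.+1 * K * r -> m < (k.+1 * K * K).+1.
Proof. move=> h1 h2; rewrite ltnS; apply: leq_trans h2 _; apply: leq_mul => //; exact: ltnW. Qed.

Theorem mainTheorem6 (k K : nat) :
  exists P : seq (seq nat),
    (forall s, s \in P -> is_perm s) /\
    forall p : seq nat, is_perm p ->
      al p < K -> (exists r, s_is k p r /\ r < K) ->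
      in_inflation P (Hpm k) p.
Proof.
set N := k.+1 * K * K.
exists (flatten [seq permutations (iota 0 j) | j <- iota 0 N.+1]); split.
  move=> s /flattenP[t /mapP[j _ ->]]; rewrite mem_permutations => ps.
  by rewrite /is_perm (perm_size ps) size_iota.
move=> p pp alK [r [[k2 Gr] rK]].
have [ps [E1 E2 E3]] := greedy_pieces Gr.
rewrite drop0 in E1.
have pE : p = [::] ++ flatten ps by rewrite E1.
have [cs [F1 F2 F3]] := assemble k2 pp alK pE E3.
rewrite E1 in F1.
have [sp ssz pinf] := inflate_ok pp F1 F3.
exists (std (map (head 0) cs)), (map std cs); split => //.
- apply/flattenP; exists (permutations (iota 0 (size cs))).
    apply/mapP; exists (size cs) => //; rewrite mem_iota add0n.
    by apply: ar_N rK _; rewrite -E2.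
  by rewrite mem_permutations -ssz.
- by rewrite size_map ssz.
- move=> t /mapP[c cc ->]; have [_ Hc _] := F3 c cc; split => //.
  by case: Hc => -[].
Qed.
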